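(* Let $M,N$ be networks of pTCWS, $q\in[0,1]$ and $\Delta\in\mathcal D(\mathcal N)$. If $M\overset{\hat\tau}{\Longrightarrow}(1-q)\overline N+q\Delta$, then $N\sqsubseteq_q M$.
   Context: The process calculus pTCWS. Processes $P,Q$ and probabilistic choices $C,D$ are $P ::= \mathsf{nil} \mid {!}\langle u\rangle.C \mid \lfloor ?(x).C\rfloor D \mid \tau.C \mid \sigma.C \mid X \mid \mathsf{fix}\,X.P$ and $C ::= \bigoplus_{i\in I} p_i{:}P_i$ ($I$ finite non-empty, $p_i\in(0,1]$, $\sum_i p_i=1$); in $\mathsf{fix}\,X.P$ every occurrence of $X$ is time-guarded. $1{:}P$ is written $P$; ${!}\langle v\rangle$ is ${!}\langle v\rangle.\mathsf{nil}$. Networks: $M::=\mathbf 0\mid M_1\mid M_2\mid n[P]^\nu\mid\bot$, where $n[P]^\nu$ is a node named $n$ running closed process $P$ with neighbour set $\nu$, and $\bot$ is a stuck network; $\mathrm{nds}(M)$ is the set of node names. Structural congruence $\equiv$: least equivalence preserved by $\mid$, making $\mid$ a commutative monoid with unit $\mathbf 0$, with $n[\mathsf{fix}\,X.P]^\nu\equiv n[P\{\mathsf{fix}\,X.P/X\}]^\nu$. Networks are assumed well-formed. $\mathrm{rcv}(P)$ holds iff $n[P]^\nu\equiv n[\lfloor ?(x).C\rfloor D]^\nu$ for some $x,C,D$. Semantics: $\mathcal D(\mathcal N)$ finite-support probability distributions on networks, $|\Delta|$ total mass of a sub-distribution, $\overline M$ Dirac; $[\![n[\bigoplus_i p_i{:}P_i]^\nu]\!]=\sum_ip_i\overline{n[P_i]^\nu}$;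 $(\Delta\mid\Theta)(M_1\mid M_2)=\Delta(M_1)\Theta(M_2)$. Transitions $M\xrightarrow{\lambda}\Delta$, $\lambda\in\{m!v\triangleright\nu, m?v,\tau,\sigma\}$, form the least relation closed under: (Snd) $m[{!}\langle v\rangle.C]^\nu\xrightarrow{m!v\triangleright\nu}[\![m[C]^\nu]\!]$; (Rcv) if $m\in\nu$: $n[\lfloor ?(x).C\rfloor D]^\nu\xrightarrow{m?v}[\![n[C\{v/x\}]^\nu]\!]$; $\mathbf 0\xrightarrow{m?v}\overline{\mathbf 0}$; (RcvEnb) if $\neg(m\in\nu\wedge\mathrm{rcv}(P))$ and $m\ne n$: $n[P]^\nu\xrightarrow{m?v}\overline{n[P]^\nu}$; (RcvPar) $M\xrightarrow{m?v}\Delta$, $N\xrightarrow{m?v}\Theta$ give $M\mid N\xrightarrow{m?v}\Delta\mid\Theta$; (Bcast) $M\xrightarrow{m!v\triangleright\nu}\Delta$, $N\xrightarrow{m?v}\Theta$ give $M\mid N\xrightarrow{m!v\triangleright(\nu\setminus\mathrm{nds}(N))}\Delta\mid\Theta$ (and symmetrically); (Tau) $m[\tau.C]^\nu\xrightarrow{\tau}[\![m[C]^\nu]\!]$; (TauPar) $M\xrightarrow{\tau}\Delta$ and $N$ not of the form $\bot\mid N'$ give $M\mid N\xrightarrow{\tau}\Delta\mid\overline N$ (and symmetrically); $\mathbf 0\xrightarrow{\sigma}\overline{\mathbf 0}$; $n[\mathsf{nil}]^\nu\xrightarrow{\sigma}\overline{n[\mathsf{nil}]^\nu}$; (Timeout)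 $n[\lfloor ?(x).C\rfloor D]^\nu\xrightarrow{\sigma}[\![n[D]^\nu]\!]$; (Sleep) $n[\sigma.C]^\nu\xrightarrow{\sigma}[\![n[C]^\nu]\!]$; ($\sigma$-Par) $M\xrightarrow{\sigma}\Delta$, $N\xrightarrow{\sigma}\Theta$ give $M\mid N\xrightarrow{\sigma}\Delta\mid\Theta$; (Rec) $n[P\{\mathsf{fix}\,X.P/X\}]^\nu\xrightarrow{\lambda}\Delta$ gives $n[\mathsf{fix}\,X.P]^\nu\xrightarrow{\lambda}\Delta$; (ShhSnd) $M\xrightarrow{m!v\triangleright\emptyset}\Delta$ gives $M\xrightarrow{\tau}\Delta$; (ObsSnd) $M\xrightarrow{m!v\triangleright\nu}\Delta$ with $\nu\ne\emptyset$ gives $M\xrightarrow{!v\triangleright\nu}\Delta$. $\bot$ has no transitions. $\alpha$ ranges over $!v\triangleright\nu$, $m?v$, $\sigma$, $\tau$. Weak transitions: $M\xrightarrow{\hat\tau}\Delta$ iff $M\xrightarrow{\tau}\Delta$ or $\Delta=\overline M$; for $\alpha\ne\tau$, $\xrightarrow{\hat\alpha}=\xrightarrow{\alpha}$. For $\Delta=\sum_{i\in I}p_i\overline{M_i}$, $\Delta\xrightarrow{\hat\alpha}\Theta$ iff for some non-empty $J\subseteq I$, $M_j\xrightarrow{\hat\alpha}\Theta_j$ ($j\in J$), $M_i$ has no $\hat\alpha$-transition ($i\notin J$), and $\Theta=\sum_{j\in J}p_j\Theta_j$. $\overset{\hat\tau}{\Longrightarrow}$ is the reflexive-transitive closure of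 $\xrightarrow{\hat\tau}$; $\overset{\hat\alpha}{\Longrightarrow}=\overset{\hat\tau}{\Longrightarrow}\xrightarrow{\hat\alpha}\overset{\hat\tau}{\Longrightarrow}$ for $\alpha\neq\tau$. A pseudoquasimetric is $d:\mathcal N\times\mathcal N\to[0,1]$ with $d(M,M)=0$ and the triangle inequality. $\Omega(\Delta,\Theta)$ is the set of matchings (distributions on pairs with marginals $\Delta,\Theta$); $\mathcal K(d)(\Delta,\Theta)=\min_{\omega\in\Omega(\Delta,\Theta)}\sum\omega(M,N)d(M,N)$. A weak simulation quasimetric is a pseudoquasimetric $d$ such that whenever $d(M,N)<1$ and $M\xrightarrow{\alpha}\Delta$ there is $\Theta$ with $N\overset{\hat\alpha}{\Longrightarrow}\Theta$ and $\mathcal K(d)(\Delta,\Theta+(1-|\Theta|)\overline\bot)\le d(M,N)$. $\mathbf m$ denotes the least weak simulation quasimetric (it exists), and $M\sqsubseteq_pN$ iff $\mathbf m(M,N)\le p$. *)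

(* Defs.v *)
From Stdlib Require Import Reals List ClassicalEpsilon FunctionalExtensionality.
Import ListNotations.
Open Scope R_scope.

Inductive term : Type :=
| TVal (v : nat)
| TVar (x : nat).

Inductive proc : Type :=
| PNil
| PSnd (u : term) (C : pchoice)
| PRcv (x : nat) (C : pchoice) (D : pchoice)
| PTau (C : pchoice)
| PSleep (C : pchoice)
| PVar (X : nat)
| PFix (X : nat) (P : proc)
with pchoice : Type :=                   (* (+)_{i in I} p_i : P_i, I non-empty *)
| CLast (p : R) (P : proc)
| CCons (p : R) (P : proc) (C : pchoice).

(* neighbour sets are sets of node names *)
Definition nset := nat -> Prop.

Inductive network : Type :=
| NZero
| NPar (M1 M2 : network)
| NNode (n : nat) (P : proc) (nu : nset)
| NBot.

Fixpoint nds (M : network) : list nat :=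
  match M with
  | NZero => []
  | NPar M1 M2 => nds M1 ++ nds M2
  | NNode n _ _ => [n]
  | NBot => []
  end.

(** * Substitutions (only closed terms are ever substituted, so no capture) *)

Definition subst_term (v x : nat) (u : term) : term :=
  match u with
  | TVar y => if Nat.eqb y x then TVal v else TVar y
  | TVal w => TVal w
  end.

Fixpoint subst_v (v x : nat) (P : proc) : proc :=
  match P with
  | PNil => PNil
  | PSnd u C => PSnd (subst_term v x u) (subst_vc v x C)
  | PRcv y C D => PRcv y (if Nat.eqb y x then C else subst_vc v x C) (subst_vc v x D)
  | PTau C => PTau (subst_vc v x C)
  | PSleep C => PSleep (subst_vc v x C)
  | PVar X => PVar X
  | PFix X Q => PFix X (subst_v v x Q)
  end
with subst_vc (v x : nat) (C : pchoice) : pchoice :=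
  match C with
  | CLast p Q => CLast p (subst_v v x Q)
  | CCons p Q C' => CCons p (subst_v v x Q) (subst_vc v x C')
  end.

Fixpoint subst_X (Q : proc) (X : nat) (P : proc) : proc :=
  match P with
  | PNil => PNil
  | PSnd u C => PSnd u (subst_Xc Q X C)
  | PRcv y C D => PRcv y (subst_Xc Q X C) (subst_Xc Q X D)
  | PTau C => PTau (subst_Xc Q X C)
  | PSleep C => PSleep (subst_Xc Q X C)
  | PVar Y => if Nat.eqb Y X then Q else PVar Y
  | PFix Y P' => if Nat.eqb Y X then PFix Y P' else PFix Y (subst_X Q X P')
  end
with subst_Xc (Q : proc) (X : nat) (C : pchoice) : pchoice :=
  match C with
  | CLast p P' => CLast p (subst_X Q X P')
  | CCons p P' C' => CCons p (subst_X Q X P') (subst_Xc Q X C')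
  end.

(* X is time-guarded in P: every free occurrence of X lies under a sigma
   prefix or in the timeout branch D of a receiver |_?(x).C_|D. *)
Fixpoint tguarded (X : nat) (P : proc) : Prop :=
  match P with
  | PNil => True
  | PSnd _ C => tguarded_c X C
  | PRcv _ C _ => tguarded_c X C
  | PTau C => tguarded_c X C
  | PSleep _ => True
  | PVar Y => Y <> X
  | PFix Y P' => Y = X \/ tguarded X P'
  end
with tguarded_c (X : nat) (C : pchoice) : Prop :=
  match C with
  | CLast _ P' => tguarded X P'
  | CCons _ P' C' => tguarded X P' /\ tguarded_c X C'
  end.

Definition term_ok (xs : list nat) (u : term) : Prop :=
  match u with TVal _ => True | TVar x => In x xs end.

Fixpoint csum (C : pchoice) : R :=
  match C with
  | CLast p _ => p
  | CCons p _ C' => p + csum C'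
  end.

(* xs: bound data variables, Xs: bound process variables *)
Fixpoint proc_wf (xs Xs : list nat) (P : proc) : Prop :=
  match P with
  | PNil => True
  | PSnd u C => term_ok xs u /\ choice_wf xs Xs C /\ csum C = 1
  | PRcv x C D => choice_wf (x :: xs) Xs C /\ csum C = 1 /\ choice_wf xs Xs D /\ csum D = 1
  | PTau C => choice_wf xs Xs C /\ csum C = 1
  | PSleep C => choice_wf xs Xs C /\ csum C = 1
  | PVar X => In X Xs
  | PFix X P' => tguarded X P' /\ proc_wf xs (X :: Xs) P'
  end
with choice_wf (xs Xs : list nat) (C : pchoice) : Prop :=
  match C with
  | CLast p P' => 0 < p <= 1 /\ proc_wf xs Xs P'
  | CCons p P' C' => 0 < p <= 1 /\ proc_wf xs Xs P' /\ choice_wf xs Xs C'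
  end.

Fixpoint net_ok (M : network) : Prop :=
  match M with
  | NZero => True
  | NPar M1 M2 => net_ok M1 /\ net_ok M2
  | NNode _ P _ => proc_wf [] [] P
  | NBot => True
  end.

Inductive scong : network -> network -> Prop :=
| SC_refl M : scong M M
| SC_sym M N : scong M N -> scong N M
| SC_trans M N O : scong M N -> scong N O -> scong M O
| SC_par M M' N N' : scong M M' -> scong N N' -> scong (NPar M N) (NPar M' N')
| SC_comm M N : scong (NPar M N) (NPar N M)
| SC_assoc M N O : scong (NPar (NPar M N) O) (NPar M (NPar N O))
| SC_unit M : scong (NPar M NZero) M
| SC_fix n X P nu : scong (NNode n (PFix X P) nu) (NNode n (subst_X (PFix X P) X P) nu).

(* rcv(P), relative to the node n[P]^nu in which P runs *)
Definition rcv (n : nat) (nu : nset) (P : proc) : Prop :=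
  exists x C D, scong (NNode n P nu) (NNode n (PRcv x C D) nu).

Definition pdist := network -> R.

Definition sumR (l : list R) : R := fold_right Rplus 0 l.

Definition dirac (M : network) : pdist :=
  fun N => if excluded_middle_informative (N = M) then 1 else 0.

Definition has_mass (T : pdist) (r : R) : Prop :=
  exists l : list network, NoDup l /\ (forall X, T X <> 0 -> In X l) /\
    sumR (map T l) = r.

Definition is_dist (D : pdist) : Prop :=
  (forall X, 0 <= D X) /\ has_mass D 1.

Fixpoint sem (n : nat) (nu : nset) (C : pchoice) : pdist :=
  match C with
  | CLast p P => fun X => p * dirac (NNode n P nu) X
  | CCons p P C' => fun X => p * dirac (NNode n P nu) X + sem n nu C' X
  end.

Definition dpar (D T : pdist) : pdist :=
  fun X => match X with NPar M1 M2 => D M1 * T M2 | _ => 0 end.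

Inductive label : Type :=
| LSnd (m v : nat) (nu : nset)
| LOut (v : nat) (nu : nset)
| LIn (m v : nat)
| LTau
| LSigma.

Definition setminus (nu : nset) (l : list nat) : nset :=
  fun k => nu k /\ ~ In k l.

Inductive step : network -> label -> pdist -> Prop :=
| T_Snd m v C nu :
    step (NNode m (PSnd (TVal v) C) nu) (LSnd m v nu) (sem m nu C)
| T_Rcv m n x C D nu v :
    nu m -> step (NNode n (PRcv x C D) nu) (LIn m v) (sem n nu (subst_vc v x C))
| T_RcvZero m v : step NZero (LIn m v) (dirac NZero)
| T_RcvEnb m n P nu v :
    ~ (nu m /\ rcv n nu P) -> m <> n ->
    step (NNode n P nu) (LIn m v) (dirac (NNode n P nu))
| T_RcvPar M N m v D T :
    step M (LIn m v) D -> step N (LIn m v) T -> step (NPar M N) (LIn m v) (dpar D T)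
| T_BcastL M N m v nu D T :
    step M (LSnd m v nu) D -> step N (LIn m v) T ->
    step (NPar M N) (LSnd m v (setminus nu (nds N))) (dpar D T)
| T_BcastR M N m v nu D T :
    step M (LIn m v) D -> step N (LSnd m v nu) T ->
    step (NPar M N) (LSnd m v (setminus nu (nds M))) (dpar D T)
| T_Tau m C nu : step (NNode m (PTau C) nu) LTau (sem m nu C)
| T_TauParL M N D :
    step M LTau D -> (~ exists N', N = NPar NBot N') ->
    step (NPar M N) LTau (dpar D (dirac N))
| T_TauParR M N D :
    step N LTau D -> (~ exists M', M = NPar NBot M') ->
    step (NPar M N) LTau (dpar (dirac M) D)
| T_SigZero : step NZero LSigma (dirac NZero)
| T_SigNil n nu : step (NNode n PNil nu) LSigma (dirac (NNode n PNil nu))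
| T_Timeout n x C D nu : step (NNode n (PRcv x C D) nu) LSigma (sem n nu D)
| T_Sleep n C nu : step (NNode n (PSleep C) nu) LSigma (sem n nu C)
| T_SigPar M N D T :
    step M LSigma D -> step N LSigma T -> step (NPar M N) LSigma (dpar D T)
| T_Rec n X P nu l D :
    step (NNode n (subst_X (PFix X P) X P) nu) l D -> step (NNode n (PFix X P) nu) l D
| T_ShhSnd M m v nu D :
    step M (LSnd m v nu) D -> (forall k, ~ nu k) -> step M LTau D
| T_ObsSnd M m v nu D :
    step M (LSnd m v nu) D -> (exists k, nu k) -> step M (LOut v nu) D.

Definition is_action (a : label) : Prop :=
  match a with LSnd _ _ _ => False | _ => True end.

Definition hstep (a : label) (M : network) (D : pdist) : Prop :=
  match a with
  | LTau => step M LTau D \/ D = dirac M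
  | _ => step M a D
  end.

(* lifting to distributions: Delta = sum_{i in I} p_i M_i, J the non-empty
   set of indices that move (lJ), the others (lN) have no hat-alpha move *)
Definition lift (a : label) (D T : pdist) : Prop :=
  exists (lJ : list (R * network * pdist)) (lN : list (R * network)),
    lJ <> [] /\
    Forall (fun '(p, M, T') => 0 < p <= 1 /\ hstep a M T') lJ /\
    Forall (fun '(p, M) => 0 < p <= 1 /\ forall T', ~ hstep a M T') lN /\
    (forall X, D X = sumR (map (fun '(p, M, _) => p * dirac M X) lJ)
                     + sumR (map (fun '(p, M) => p * dirac M X) lN)) /\
    (forall X, T X = sumR (map (fun '(p, _, T') => p * T' X) lJ)).

Inductive wtau : pdist -> pdist -> Prop :=
| WT_refl D : wtau D D
| WT_step D D' D'' : lift LTau D D' -> wtau D' D'' -> wtau D D''.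

Definition wstep (a : label) (M : network) (T : pdist) : Prop :=
  match a with
  | LTau => wtau (dirac M) T
  | _ => exists D1 D2, wtau (dirac M) D1 /\ lift a D1 D2 /\ wtau D2 T
  end.

(* a matching, as a finite list of weighted pairs (omega(M,N) = sum of weights) *)
Definition matching (w : list (R * network * network)) (D T : pdist) : Prop :=
  Forall (fun '(r, _, _) => 0 <= r) w /\
  (forall X, D X = sumR (map (fun '(r, M, _) => r * dirac M X) w)) /\
  (forall Y, T Y = sumR (map (fun '(r, _, N) => r * dirac N Y) w)).

Definition mcost (d : network -> network -> R) (w : list (R * network * network)) : R :=
  sumR (map (fun '(r, M, N) => r * d M N) w).

Definition is_kant (d : network -> network -> R) (D T : pdist) (k : R) : Prop :=
  (exists w, matching w D T /\ mcost d w = k) /\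
  (forall w, matching w D T -> k <= mcost d w).

Definition kant_le (d : network -> network -> R) (D T : pdist) (r : R) : Prop :=
  exists k, is_kant d D T k /\ k <= r.

Definition pseudoquasimetric (d : network -> network -> R) : Prop :=
  (forall M N, net_ok M -> net_ok N -> 0 <= d M N <= 1) /\
  (forall M, net_ok M -> d M M = 0) /\
  (forall M N O, net_ok M -> net_ok N -> net_ok O -> d M O <= d M N + d N O).

Definition weak_sim_qm (d : network -> network -> R) : Prop :=
  pseudoquasimetric d /\
  forall M N, net_ok M -> net_ok N -> d M N < 1 ->
    forall a D, is_action a -> step M a D ->
      exists T m, wstep a N T /\ has_mass T m /\
        kant_le d D (fun X => T X + (1 - m) * dirac NBot X) (d M N).

Definition least_wsqm (mm : network -> network -> R) : Prop :=
  weak_sim_qm mm /\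
  forall d, weak_sim_qm d -> forall M N, net_ok M -> net_ok N -> mm M N <= d M N.

(* M is simulated by N up to p *)
Definition qsim (mm : network -> network -> R) (p : R) (M N : network) : Prop :=
  mm M N <= p.

(* Main.v *)
Require Import Defs.
From Stdlib Require Import Reals List Lra Lia ClassicalEpsilon.
Import ListNotations.
Open Scope R_scope.

Lemma sumR_app l1 l2 : sumR (l1 ++ l2) = sumR l1 + sumR l2.
Proof. induction l1; simpl; [lra|rewrite IHl1; lra]. Qed.

Lemma sumR_plus {A} (f g : A -> R) l :
  sumR (map (fun x => f x + g x) l) = sumR (map f l) + sumR (map g l).
Proof. induction l; simpl; [lra|rewrite IHl; lra]. Qed.

Lemma sumR_scal {A} (c : R) (f : A -> R) l :
  sumR (map (fun x => c * f x) l) = c * sumR (map f l).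
Proof. induction l; simpl; [lra|rewrite IHl; lra]. Qed.

Lemma sumR_ext {A} (f g : A -> R) l :
  (forall x, In x l -> f x = g x) -> sumR (map f l) = sumR (map g l).
Proof. intros H; f_equal; apply map_ext_in; auto. Qed.

Lemma sumR_nonneg {A} (f : A -> R) l :
  (forall x, In x l -> 0 <= f x) -> 0 <= sumR (map f l).
Proof.
  induction l; simpl; intros H; [lra|].
  pose proof (H a (or_introl eq_refl)). pose proof (IHl (fun x Hx => H x (or_intror Hx))). lra.
Qed.

Lemma sumR_le {A} (f g : A -> R) l :
  (forall x, In x l -> f x <= g x) -> sumR (map f l) <= sumR (map g l).
Proof.
  induction l; simpl; intros H; [lra|].
  pose proof (H a (or_introl eq_refl)). pose proof (IHl (fun x Hx => H x (or_intror Hx))). lra.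
Qed.

Lemma sumR_zero {A} (f : A -> R) l :
  (forall x, In x l -> f x = 0) -> sumR (map f l) = 0.
Proof.
  intros H; rewrite (sumR_ext f (fun _ => 0)); auto.
  induction l; simpl; auto. rewrite IHl; auto with datatypes; lra.
Qed.

Lemma sumR_ge_elem {A} (f : A -> R) l x :
  In x l -> (forall y, In y l -> 0 <= f y) -> f x <= sumR (map f l).
Proof.
  induction l; simpl; intros Hin H; [contradiction|].
  destruct Hin as [<-|Hin].
  - pose proof (sumR_nonneg f l (fun y Hy => H y (or_intror Hy))). lra.
  - pose proof (H a (or_introl eq_refl)). pose proof (IHl Hin (fun y Hy => H y (or_intror Hy))). lra.
Qed.

Lemma sumR_nz {A} (f : A -> R) l : sumR (map f l) <> 0 -> exists x, In x l /\ f x <> 0.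
Proof.
  intros H. destruct (classic (exists x, In x l /\ f x <> 0)) as [|Hn]; auto.
  exfalso; apply H; apply sumR_zero. intros x Hx.
  destruct (classic (f x = 0)); auto. exfalso; apply Hn; eauto.
Qed.

Lemma sumR_swap {A B} (F : A -> B -> R) l1 l2 :
  sumR (map (fun x => sumR (map (fun y => F x y) l2)) l1) =
  sumR (map (fun y => sumR (map (fun x => F x y) l1)) l2).
Proof.
  induction l1; simpl.
  - symmetry; apply sumR_zero; auto.
  - rewrite IHl1. rewrite <- sumR_plus. reflexivity.
Qed.

Lemma sumR_flat_map {A B} (g : A -> list B) (f : B -> R) l :
  sumR (map f (flat_map g l)) = sumR (map (fun x => sumR (map f (g x))) l).
Proof. induction l; simpl; auto. rewrite map_app, sumR_app, IHl; auto. Qed.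

Lemma sumR_filter {A} (p : A -> bool) (f : A -> R) l :
  sumR (map f l) = sumR (map f (filter p l)) + sumR (map f (filter (fun x => negb (p x)) l)).
Proof. induction l; simpl; [lra|]. destruct (p a); simpl; rewrite IHl; lra. Qed.

Lemma dirac_eq M : dirac M M = 1.
Proof. unfold dirac; destruct excluded_middle_informative; congruence. Qed.
Lemma dirac_neq M X : X <> M -> dirac M X = 0.
Proof. unfold dirac; destruct excluded_middle_informative; congruence. Qed.
Lemma dirac_bounds M X : 0 <= dirac M X <= 1.
Proof. unfold dirac; destruct excluded_middle_informative; lra. Qed.

Lemma sum_dirac_notin {A} (c : A -> R) (g : A -> network) l X :
  (forall y, In y l -> g y <> X) -> sumR (map (fun y => c y * dirac (g y) X) l) = 0.
Proof. intros H; apply sumR_zero; intros y Hy; rewrite dirac_neq; [lra|]; intro E; apply (H y Hy); auto. Qed.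

Lemma sum_dirac_nodup (c : network -> R) l X :
  NoDup l -> In X l -> sumR (map (fun y => c y * dirac y X) l) = c X.
Proof.
  induction 1; simpl; intros Hin; [contradiction|].
  destruct Hin as [<-|Hin].
  - rewrite dirac_eq, sum_dirac_notin; [lra|]. intros y Hy E; subst; contradiction.
  - rewrite dirac_neq by (intro E; subst; contradiction). rewrite IHNoDup; auto; lra.
Qed.

(** * finite representations *)
Definition ev (l : list (R * network)) : pdist :=
  fun Y => sumR (map (fun '(r, Z) => r * dirac Z Y) l).
Definition wt (l : list (R * network)) : R := sumR (map fst l).

Lemma ev_app l1 l2 Y : ev (l1 ++ l2) Y = ev l1 Y + ev l2 Y.
Proof. unfold ev; rewrite map_app, sumR_app; auto. Qed.
Lemma wt_app l1 l2 : wt (l1 ++ l2) = wt l1 + wt l2.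
Proof. unfold wt; rewrite map_app, sumR_app; auto. Qed.

Definition scl (c : R) (l : list (R * network)) := map (fun '(r, Z) => (c * r, Z)) l.
Lemma ev_scl c l Y : ev (scl c l) Y = c * ev l Y.
Proof.
  unfold ev, scl; rewrite map_map, <- sumR_scal; apply sumR_ext; intros [r Z] _; lra.
Qed.
Lemma wt_scl c l : wt (scl c l) = c * wt l.
Proof. unfold wt, scl; rewrite map_map, <- sumR_scal; apply sumR_ext; intros [r Z] _; simpl; lra. Qed.

Lemma has_mass_ext D D' m : (forall Y, D Y = D' Y) -> has_mass D m -> has_mass D' m.
Proof.
  intros H [l [Hnd [Hs Hm]]]; exists l; repeat split; auto.
  - intros X HX; apply Hs; rewrite H; auto.
  - rewrite <- Hm; apply sumR_ext; intros; rewrite H; auto.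
Qed.

Lemma has_mass_ev l : has_mass (ev l) (wt l).
Proof.
  induction l as [|[r Z] l IH].
  - exists []; split; [constructor|split]; simpl; auto; intros X H; exfalso; apply H; reflexivity.
  - destruct IH as [s [Hnd [Hs Hm]]].
    assert (E : forall Y, ev ((r, Z) :: l) Y = r * dirac Z Y + ev l Y) by (intros; reflexivity).
    destruct (classic (In Z s)) as [Hin|Hnin].
    + exists s; repeat split; auto.
      * intros X HX. rewrite E in HX. destruct (classic (X = Z)) as [->|Hne]; auto.
        apply Hs. rewrite dirac_neq in HX; auto. lra.
      * rewrite (sumR_ext _ (fun Y => r * dirac Z Y + ev l Y)) by (intros; apply E).
        rewrite sumR_plus, Hm. unfold wt; simpl.
        rewrite (sumR_ext _ (fun Y => (fun _ => r) Y * dirac Y Z)).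
        2:{ intros Y _. unfold dirac. destruct excluded_middle_informative, excluded_middle_informative; subst; try congruence; lra. }
        rewrite sum_dirac_nodup; auto.
    + assert (HZ : ev l Z = 0).
      { destruct (classic (ev l Z = 0)); auto. exfalso; apply Hnin; apply Hs; auto. }
      exists (Z :: s); repeat split.
      * constructor; auto.
      * intros X HX. rewrite E in HX. destruct (classic (X = Z)) as [->|Hne]; [left; auto|].
        right; apply Hs. rewrite dirac_neq in HX; auto. lra.
      * simpl. rewrite E, dirac_eq, HZ.
        rewrite (sumR_ext _ (fun Y => r * dirac Z Y + ev l Y)) by (intros; apply E).
        rewrite sumR_plus, Hm. unfold wt; simpl.
        rewrite (sumR_zero (fun Y => r * dirac Z Y)). lra.
        intros Y HY. rewrite dirac_neq. lra. intro E'; subst; contradiction.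
Qed.


Fixpoint pinv (P : proc) : Prop :=
  match P with
  | PNil => True
  | PSnd _ C => cinv C /\ csum C = 1
  | PRcv _ C D => cinv C /\ csum C = 1 /\ cinv D /\ csum D = 1
  | PTau C => cinv C /\ csum C = 1
  | PSleep C => cinv C /\ csum C = 1
  | PVar _ => True
  | PFix _ P' => pinv P'
  end
with cinv (C : pchoice) : Prop :=
  match C with
  | CLast p P' => 0 <= p /\ pinv P'
  | CCons p P' C' => 0 <= p /\ pinv P' /\ cinv C'
  end.

Scheme proc_mind := Induction for proc Sort Prop
  with pchoice_mind := Induction for pchoice Sort Prop.
Combined Scheme proc_pchoice_mind from proc_mind, pchoice_mind.

Lemma csum_subst_v v x C : csum (subst_vc v x C) = csum C.
Proof. induction C; simpl; auto. rewrite IHC; auto. Qed.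
Lemma csum_subst_X Q X C : csum (subst_Xc Q X C) = csum C.
Proof. induction C; simpl; auto. rewrite IHC; auto. Qed.

Lemma pinv_subst_v v x :
  (forall P, pinv P -> pinv (subst_v v x P)) /\ (forall C, cinv C -> cinv (subst_vc v x C)).
Proof.
  apply proc_pchoice_mind; simpl; intros; try tauto;
    try (destruct H0; split; [auto|rewrite csum_subst_v; auto]).
  - destruct H1 as [h1 [h2 [h3 h4]]].
    destruct (Nat.eqb x0 x); repeat split; try rewrite csum_subst_v; auto.
Qed.

Lemma pinv_subst_X Q X : pinv Q ->
  (forall P, pinv P -> pinv (subst_X Q X P)) /\ (forall C, cinv C -> cinv (subst_Xc Q X C)).
Proof.
  intros HQ. apply proc_pchoice_mind; simpl; intros; try tauto;
    try (destruct H0; split; [auto|rewrite csum_subst_X; auto]).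
  - destruct H1 as [h1 [h2 [h3 h4]]]. repeat split; try rewrite csum_subst_X; auto.
  - destruct (Nat.eqb X0 X); simpl; auto.
  - destruct (Nat.eqb X0 X); simpl; auto.
Qed.

Lemma wf_pinv :
  (forall P xs Xs, proc_wf xs Xs P -> pinv P) /\ (forall C xs Xs, choice_wf xs Xs C -> cinv C).
Proof.
  apply proc_pchoice_mind; simpl; intros;
  repeat match goal with H: _ /\ _ |- _ => destruct H end; repeat split; eauto; lra.
Qed.

Fixpoint ninv (M : network) : Prop :=
  match M with
  | NZero => True
  | NPar M1 M2 => ninv M1 /\ ninv M2
  | NNode _ P _ => pinv P
  | NBot => True
  end.

Lemma netok_ninv M : net_ok M -> ninv M.
Proof. induction M; simpl; intuition. eapply (proj1 wf_pinv); eauto. Qed.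

Definition good (D : pdist) (w : R) : Prop :=
  exists l, (forall Y, D Y = ev l Y) /\ Forall (fun '(r, Z) => 0 <= r /\ ninv Z) l /\ wt l = w.

Fixpoint clist n nu (C : pchoice) : list (R * network) :=
  match C with
  | CLast p P => [(p, NNode n P nu)]
  | CCons p P C' => (p, NNode n P nu) :: clist n nu C'
  end.

Definition pchoice_ind' (Pr : pchoice -> Prop) (h1 : forall p Q, Pr (CLast p Q))
  (h2 : forall p Q C, Pr C -> Pr (CCons p Q C)) : forall C, Pr C :=
  fix f C := match C with CLast p Q => h1 p Q | CCons p Q C' => h2 p Q C' (f C') end.

Lemma good_sem n nu C : cinv C -> good (sem n nu C) (csum C).
Proof.
  intros H; exists (clist n nu C); repeat split.
  - intros Y; induction C as [p P|p P C IH] using pchoice_ind'; unfold ev in *; simpl.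
    + lra.
    + rewrite IH; [lra|apply H].
  - induction C as [p P|p P C IH] using pchoice_ind'; simpl in *.
    + constructor; [tauto|constructor].
    + constructor; [tauto|apply IH; tauto].
  - induction C as [p P|p P C IH] using pchoice_ind'; unfold wt in *; simpl.
    + lra.
    + rewrite IH; [lra|apply H].
Qed.

Lemma good_dirac M : ninv M -> good (dirac M) 1.
Proof.
  intros H; exists [(1, M)]; repeat split.
  - intros Y; unfold ev; simpl; lra.
  - constructor; [split; [lra|auto]|constructor].
  - unfold wt; simpl; lra.
Qed.

Lemma good_ext D D' w : (forall Y, D Y = D' Y) -> good D w -> good D' w.
Proof. intros E [l [h1 h2]]; exists l; split; auto; intros; rewrite <- E; auto. Qed.

Definition lprod (l1 l2 : list (R * network)) :=
  flat_map (fun '(r, X) => map (fun '(s, Y) => (r * s, NPar X Y)) l2) l1.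

Lemma dirac_par X Y A B : dirac (NPar X Y) (NPar A B) = dirac X A * dirac Y B.
Proof.
  unfold dirac; repeat destruct excluded_middle_informative; try congruence; try lra;
  try (inversion e; subst; congruence).
Qed.

Lemma dirac_par0 X Y Z : (forall A B, Z <> NPar A B) -> dirac (NPar X Y) Z = 0.
Proof. intros H; apply dirac_neq; auto. Qed.

Lemma ev_lprod l1 l2 Z : dpar (ev l1) (ev l2) Z = ev (lprod l1 l2) Z.
Proof.
  unfold ev, lprod. rewrite sumR_flat_map.
  destruct Z as [| A B | | ]; simpl;
  try (symmetry; apply sumR_zero; intros [r X] _; rewrite map_map; apply sumR_zero;
       intros [s Y] _; rewrite dirac_par0; [lra|congruence]).
  rewrite Rmult_comm, <- sumR_scal. apply sumR_ext. intros [r X] _. rewrite map_map.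
  rewrite Rmult_comm, <- sumR_scal. apply sumR_ext. intros [s Y] _.
  rewrite dirac_par. lra.
Qed.

Lemma wt_lprod l1 l2 : wt (lprod l1 l2) = wt l1 * wt l2.
Proof.
  unfold wt, lprod. rewrite sumR_flat_map. rewrite Rmult_comm, <- sumR_scal.
  apply sumR_ext. intros [r X] _. rewrite map_map. rewrite Rmult_comm, <- sumR_scal.
  apply sumR_ext. intros [s Y] _. simpl; lra.
Qed.

Lemma good_dpar D T : good D 1 -> good T 1 -> good (dpar D T) 1.
Proof.
  intros [l1 [e1 [f1 w1]]] [l2 [e2 [f2 w2]]]. exists (lprod l1 l2); repeat split.
  - intros Z. rewrite <- ev_lprod. unfold dpar. destruct Z; auto. rewrite e1, e2; auto.
  - unfold lprod. apply Forall_forall. intros [r Z] Hin. apply in_flat_map in Hin.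
    destruct Hin as [[r1 X] [Hx Hin]]. apply in_map_iff in Hin. destruct Hin as [[r2 Y] [E Hy]].
    inversion E; subst.
    rewrite Forall_forall in f1, f2. specialize (f1 _ Hx). specialize (f2 _ Hy). simpl in *.
    split; [apply Rmult_le_pos; tauto|tauto].
  - rewrite wt_lprod, w1, w2; lra.
Qed.

Lemma step_good M a D : step M a D -> ninv M -> good D 1.
Proof.
  induction 1; simpl; intros Hinv; try tauto.
  - destruct Hinv as [h1 h2]. rewrite <- h2. apply good_sem; auto.
  - destruct Hinv as [h1 [h2 _]]. rewrite <- h2, <- (csum_subst_v v x). apply good_sem.
    apply (pinv_subst_v v x); auto.
  - apply good_dirac; simpl; auto.
  - apply good_dirac; simpl; auto.
  - apply good_dpar; tauto.
  - apply good_dpar; tauto.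
  - apply good_dpar; tauto.
  - destruct Hinv as [h1 h2]. rewrite <- h2. apply good_sem; auto.
  - apply good_dpar; [tauto|apply good_dirac; tauto].
  - apply good_dpar; [apply good_dirac; tauto|tauto].
  - apply good_dirac; simpl; auto.
  - apply good_dirac; simpl; auto.
  - destruct Hinv as [_ [_ [h1 h2]]]. rewrite <- h2. apply good_sem; auto.
  - destruct Hinv as [h1 h2]. rewrite <- h2. apply good_sem; auto.
  - apply good_dpar; tauto.
  - apply IHstep. simpl. apply (pinv_subst_X (PFix X P) X); simpl; auto.
Qed.

Lemma hstep_good a M D : hstep a M D -> ninv M -> good D 1.
Proof.
  intros H Hi. destruct a; simpl in H; try (exact (step_good _ _ _ H Hi)).
  destruct H as [H|H]; [exact (step_good _ _ _ H Hi)|subst; apply good_dirac; auto].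
Qed.

Lemma good_supp D w Y : good D w -> D Y <> 0 -> ninv Y.
Proof.
  intros [l [e [f _]]] H. rewrite e in H. unfold ev in H. apply sumR_nz in H.
  destruct H as [[r Z] [Hin Hz]]. destruct (classic (Y = Z)) as [->|Hne].
  - rewrite Forall_forall in f. apply (f _ Hin).
  - rewrite dirac_neq in Hz; auto. lra.
Qed.


Definition feasible (K : nat) (ub : nat -> R) (I : Type) (g : I -> nat -> R) (e : I -> R)
  (v : nat -> R) : Prop :=
  (forall k, lt k K -> Rle 0 (v k) /\ Rle (v k) (ub k)) /\
  (forall i, sumR (List.map (fun k => Rmult (v k) (g i k)) (List.seq 0 K)) = e i).

Definition lin (K : nat) (c : nat -> R) (v : nat -> R) : R :=
  sumR (List.map (fun k => Rmult (v k) (c k)) (List.seq 0 K)).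

Definition LinMinProp : Prop :=
  forall (K : nat) (ub : nat -> R) (I : Type) (g : I -> nat -> R) (e : I -> R) (c : nat -> R),
  (exists v, feasible K ub I g e v) ->
  exists v, feasible K ub I g e v /\
    forall v', feasible K ub I g e v' -> Rle (lin K c v) (lin K c v').

Lemma map_nth_seq0 {A} (l : list A) d : map (fun k => nth k l d) (seq 0 (length l)) = l.
Proof.
  induction l; simpl; auto. f_equal. rewrite <- seq_shift, map_map. simpl. auto.
Qed.

Lemma sum_single {A} (l : list A) x (F : A -> R) :
  NoDup l -> In x l -> (forall y, In y l -> y <> x -> F y = 0) -> sumR (map F l) = F x.
Proof.
  induction 1 as [|a l Hna Hnd IH]; simpl; intros Hin Hz; [contradiction|].
  destruct Hin as [<-|Hin].
  - rewrite sumR_zero; [lra|]. intros y Hy. apply Hz; auto. intro E; subst; contradiction.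
  - rewrite Hz; auto. rewrite IH; auto. lra. intro E; subst; contradiction.
Qed.

Definition netpair_dec : forall x y : network * network, {x = y} + {x <> y} :=
  fun x y => excluded_middle_informative (x = y).

Section Kant.
Variable d : network -> network -> R.
Variables D T : pdist.
Variable w0 : list (R * network * network).
Hypothesis Hw0 : matching w0 D T.

Let A := map (fun '(_, M, _) => M) w0.
Let B := map (fun '(_, _, N) => N) w0.
Let P := nodup netpair_dec (list_prod A B).
Let K := length P.
Let pk k := nth k P (NZero, NZero).

Lemma supp_A X : D X <> 0 -> In X A.
Proof.
  intros H. destruct Hw0 as [_ [h1 _]]. rewrite h1 in H. apply sumR_nz in H.
  destruct H as [[[r M] N] [Hin Hz]]. destruct (classic (X = M)) as [->|Hne].
  - unfold A. apply in_map_iff. exists (r, M, N); auto.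
  - rewrite dirac_neq in Hz; auto. lra.
Qed.

Lemma supp_B Y : T Y <> 0 -> In Y B.
Proof.
  intros H. destruct Hw0 as [_ [_ h1]]. rewrite h1 in H. apply sumR_nz in H.
  destruct H as [[[r M] N] [Hin Hz]]. destruct (classic (Y = N)) as [->|Hne].
  - unfold B. apply in_map_iff. exists (r, M, N); auto.
  - rewrite dirac_neq in Hz; auto. lra.
Qed.

Definition vw (w : list (R * network * network)) (k : nat) : R :=
  sumR (map (fun '(r, M, N) => r * (dirac M (fst (pk k)) * dirac N (snd (pk k)))) w).

Lemma inP w r M N : matching w D T -> In (r, M, N) w -> r <> 0 -> In (M, N) P.
Proof.
  intros [hn [h1 h2]] Hin Hr.
  rewrite Forall_forall in hn. pose proof (hn _ Hin) as Hr0. simpl in Hr0.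
  assert (DM : D M <> 0).
  { rewrite h1. intro E.
    assert (r * dirac M M <= sumR (map (fun '(r, M0, _) => r * dirac M0 M) w)).
    { apply (sumR_ge_elem (fun '(r, M0, _) => r * dirac M0 M) w (r, M, N)); auto.
      intros [[r' M'] N'] Hy. apply Rmult_le_pos; [apply (hn _ Hy)|apply dirac_bounds]. }
    rewrite dirac_eq in H. lra. }
  assert (TN : T N <> 0).
  { rewrite h2. intro E.
    assert (r * dirac N N <= sumR (map (fun '(r, _, Nn) => r * dirac Nn N) w)).
    { apply (sumR_ge_elem (fun '(r, _, Nn) => r * dirac Nn N) w (r, M, N)); auto.
      intros [[r' M'] N'] Hy. apply Rmult_le_pos; [apply (hn _ Hy)|apply dirac_bounds]. }
    rewrite dirac_eq in H. lra. }
  unfold P. apply nodup_In. apply in_prod; [apply supp_A|apply supp_B]; auto.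
Qed.

Lemma key w (h : network * network -> R) : matching w D T ->
  sumR (map (fun k => vw w k * h (pk k)) (seq 0 K)) = sumR (map (fun '(r, M, N) => r * h (M, N)) w).
Proof.
  intros Hw.
  rewrite (sumR_ext _ (fun k => sumR (map (fun x => (fun '(r, M, N) => r * (dirac M (fst (pk k)) * dirac N (snd (pk k)))) x * h (pk k)) w))).
  2:{ intros k _. unfold vw. rewrite Rmult_comm, <- sumR_scal. apply sumR_ext. intros; lra. }
  rewrite sumR_swap. apply sumR_ext. intros [[r M] N] Hin.
  replace (seq 0 K) with (map (fun k => k) (seq 0 K)) by apply map_id.
  rewrite map_map.
  transitivity (sumR (map (fun p => r * (dirac M (fst p) * dirac N (snd p)) * h p) P)).
  { unfold K, pk. rewrite <- (map_nth_seq0 P (NZero, NZero)) at 2. rewrite map_map. reflexivity. }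
  destruct (Req_dec r 0) as [->|Hr].
  - rewrite sumR_zero; [lra|]. intros; lra.
  - rewrite (sum_single P (M, N)); simpl.
    + rewrite !dirac_eq; lra.
    + apply NoDup_nodup.
    + eapply inP; eauto.
    + intros [M' N'] _ Hne. simpl.
      destruct (classic (M' = M)) as [->|h1].
      * rewrite (dirac_neq N N'); [lra|]. intro E; subst; auto.
      * rewrite (dirac_neq M M'); [lra|auto].
Qed.

Definition Icons := (network + network)%type.
Definition gK (i : Icons) (k : nat) : R :=
  match i with inl X => dirac (fst (pk k)) X | inr Y => dirac (snd (pk k)) Y end.
Definition eK (i : Icons) : R := match i with inl X => D X | inr Y => T Y end.
Definition ubK (k : nat) : R := D (fst (pk k)).
Definition cK (k : nat) : R := d (fst (pk k)) (snd (pk k)).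

Lemma vw_feasible w : matching w D T -> feasible K ubK Icons gK eK (vw w).
Proof.
  intros Hw.
  assert (Hc : forall i, sumR (map (fun k => vw w k * gK i k) (seq 0 K)) = eK i).
  { intros [X|Y]; simpl.
    - rewrite (key w (fun p => dirac (fst p) X)); auto.
      destruct Hw as [_ [h1 _]]. rewrite h1. apply sumR_ext. intros [[r M] N] _. reflexivity.
    - rewrite (key w (fun p => dirac (snd p) Y)); auto.
      destruct Hw as [_ [_ h2]]. rewrite h2. apply sumR_ext. intros [[r M] N] _. reflexivity. }
  assert (Hnn : forall k, 0 <= vw w k).
  { intros k. unfold vw. apply sumR_nonneg. intros [[r M] N] Hin.
    destruct Hw as [hn _]. rewrite Forall_forall in hn. pose proof (hn _ Hin). simpl in *.
    pose proof (dirac_bounds M (fst (pk k))). pose proof (dirac_bounds N (snd (pk k))).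
    apply Rmult_le_pos; auto. apply Rmult_le_pos; tauto. }
  split; auto.
  intros k Hk. split; auto. unfold ubK.
  pose proof (Hc (inl (fst (pk k)))) as Hck. simpl in Hck. rewrite <- Hck.
  replace (vw w k) with (vw w k * dirac (fst (pk k)) (fst (pk k))) by (rewrite dirac_eq; lra).
  apply (sumR_ge_elem (fun k0 => vw w k0 * dirac (fst (pk k0)) (fst (pk k)))).
  - apply in_seq; lia.
  - intros y _. apply Rmult_le_pos; auto. apply dirac_bounds.
Qed.

Lemma mcost_vw w : matching w D T -> mcost d w = lin K cK (vw w).
Proof.
  intros Hw. unfold lin, cK. rewrite (key w (fun p => d (fst p) (snd p))); auto.
  all: try reflexivity.
Qed.

Lemma kant_exists_sec : LinMinProp -> exists k, is_kant d D T k.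
Proof.
  intros LM.
  destruct (LM K ubK Icons gK eK cK) as [v [Hv Hmin]].
  { exists (vw w0). apply vw_feasible; auto. }
  set (ws := map (fun k => (v k, fst (pk k), snd (pk k))) (seq 0 K)).
  assert (Hws : matching ws D T).
  { destruct Hv as [hb hc]. split; [|split].
    - apply Forall_forall. intros [[r M] N] Hin. unfold ws in Hin. apply in_map_iff in Hin.
      destruct Hin as [k [E Hk]]. inversion E; subst. apply in_seq in Hk. apply hb; lia.
    - intros X. pose proof (hc (inl X)) as E; simpl in E; rewrite <- E. unfold ws. rewrite map_map. reflexivity.
    - intros Y. pose proof (hc (inr Y)) as E; simpl in E; rewrite <- E. unfold ws. rewrite map_map. reflexivity. }
  exists (mcost d ws). split.
  - exists ws; auto.
  - intros w Hw. rewrite (mcost_vw w Hw).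
    replace (mcost d ws) with (lin K cK v).
    + apply Hmin. apply vw_feasible; auto.
    + unfold mcost, ws, lin. rewrite map_map. reflexivity.
Qed.
End Kant.

Lemma kant_exists : LinMinProp -> forall d D T w0, matching w0 D T -> exists k, is_kant d D T k.
Proof. intros LM d D T w0 H. exact (kant_exists_sec d D T w0 H LM). Qed.


Lemma wtau_snoc D D' D'' : wtau D D' -> lift LTau D' D'' -> wtau D D''.
Proof.
  induction 1; intros Hl.
  - eapply WT_step; [exact Hl|constructor].
  - eapply WT_step; [exact H|auto].
Qed.

Lemma lift_inv D D' : lift LTau D D' -> (forall Z, D Z <> 0 -> ninv Z) -> forall Z, D' Z <> 0 -> ninv Z.
Proof.
  intros [lJ [lN [_ [FJ [FN [HD HT]]]]]] Hinv Z HZ.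
  rewrite HT in HZ. apply sumR_nz in HZ. destruct HZ as [[[p Mi] Ti] [Hin Hz]].
  rewrite Forall_forall in FJ, FN. pose proof (FJ _ Hin) as [Hp Hh]. simpl in Hh.
  assert (HMi : D Mi <> 0).
  { rewrite HD.
    assert (p * dirac Mi Mi <= sumR (map (fun '(p, M, _) => p * dirac M Mi) lJ)).
    { apply (sumR_ge_elem (fun '(p, M, _) => p * dirac M Mi) lJ (p, Mi, Ti)); auto.
      intros [[p' M'] T'] Hy. pose proof (FJ _ Hy) as [h _]. apply Rmult_le_pos; [lra|apply dirac_bounds]. }
    assert (0 <= sumR (map (fun '(p, M) => p * dirac M Mi) lN)).
    { apply sumR_nonneg. intros [p' M'] Hy. pose proof (FN _ Hy) as [h _]. apply Rmult_le_pos; [lra|apply dirac_bounds]. }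
    rewrite dirac_eq in H. lra. }
  apply Hinv in HMi.
  assert (Ti Z <> 0) by (intro E; rewrite E in Hz; lra).
  apply (good_supp Ti 1 Z); [apply (hstep_good LTau Mi Ti); auto|auto].
Qed.

Lemma wtau_inv D D' : wtau D D' -> (forall Z, D Z <> 0 -> ninv Z) -> forall Z, D' Z <> 0 -> ninv Z.
Proof.
  induction 1; auto. intros Hi. apply IHwtau. eapply lift_inv; eauto.
Qed.

Lemma lift_single a X D : hstep a X D -> lift a (dirac X) D.
Proof.
  intros H. exists [(1, X, D)], []. repeat split.
  - discriminate.
  - constructor; [split; [lra|auto]|constructor].
  - constructor.
  - intros Y; simpl; lra.
  - intros Y; simpl; lra.
Qed.

Lemma step_hstep a X D : is_action a -> step X a D -> hstep a X D.
Proof. destruct a; simpl; auto; tauto. Qed.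

Lemma wstep_single a X D : is_action a -> hstep a X D -> wstep a X D.
Proof.
  destruct a; simpl; intros Ha H; try contradiction;
  try (exists (dirac X), D; split; [constructor|split; [apply lift_single; auto|constructor]]).
  eapply WT_step; [apply lift_single; exact H|constructor].
Qed.

(** * matchings from lists *)
Definition ldiag (c : R) (l : list (R * network)) : list (R * network * network) :=
  map (fun '(r, X) => (c * r, X, X)) l.
Definition lprod2 (l1 l2 : list (R * network)) : list (R * network * network) :=
  flat_map (fun '(r, X) => map (fun '(s, Y) => (r * s, X, Y)) l2) l1.

Definition mfst (w : list (R * network * network)) X := sumR (map (fun '(r, M, _) => r * dirac M X) w).
Definition msnd (w : list (R * network * network)) Y := sumR (map (fun '(r, _, N) => r * dirac N Y) w).

Lemma mfst_app w1 w2 X : mfst (w1 ++ w2) X = mfst w1 X + mfst w2 X.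
Proof. unfold mfst; rewrite map_app, sumR_app; auto. Qed.
Lemma msnd_app w1 w2 X : msnd (w1 ++ w2) X = msnd w1 X + msnd w2 X.
Proof. unfold msnd; rewrite map_app, sumR_app; auto. Qed.
Lemma mcost_app d w1 w2 : mcost d (w1 ++ w2) = mcost d w1 + mcost d w2.
Proof. unfold mcost; rewrite map_app, sumR_app; auto. Qed.

Lemma mfst_diag c l X : mfst (ldiag c l) X = c * ev l X.
Proof. unfold mfst, ldiag, ev. rewrite map_map, <- sumR_scal. apply sumR_ext. intros [r Z] _. lra. Qed.
Lemma msnd_diag c l X : msnd (ldiag c l) X = c * ev l X.
Proof. unfold msnd, ldiag, ev. rewrite map_map, <- sumR_scal. apply sumR_ext. intros [r Z] _. lra. Qed.
Lemma mcost_diag d c l : (forall Z, d Z Z = 0) -> mcost d (ldiag c l) = 0.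
Proof. intros H. unfold mcost, ldiag. rewrite map_map. apply sumR_zero. intros [r Z] _. rewrite H; lra. Qed.

Lemma mfst_prod l1 l2 X : mfst (lprod2 l1 l2) X = ev l1 X * wt l2.
Proof.
  unfold mfst, lprod2, ev, wt. rewrite sumR_flat_map. rewrite Rmult_comm, <- sumR_scal.
  apply sumR_ext. intros [r Z] _. rewrite map_map. rewrite Rmult_comm, <- sumR_scal.
  apply sumR_ext. intros [s Y] _. simpl. lra.
Qed.
Lemma msnd_prod l1 l2 X : msnd (lprod2 l1 l2) X = wt l1 * ev l2 X.
Proof.
  unfold msnd, lprod2, ev, wt. rewrite sumR_flat_map. rewrite Rmult_comm, <- sumR_scal.
  apply sumR_ext. intros [r Z] _. rewrite map_map. simpl. rewrite Rmult_comm, <- sumR_scal.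
  apply sumR_ext. intros [s Y] _. lra.
Qed.

Definition nonnegl (l : list (R * network)) := Forall (fun '(r, _) => 0 <= r) l.

Lemma mcost_prod d l1 l2 : (forall X Y, 0 <= d X Y <= 1) -> nonnegl l1 -> nonnegl l2 ->
  mcost d (lprod2 l1 l2) <= wt l1 * wt l2.
Proof.
  intros Hd H1 H2. unfold mcost, lprod2, wt. rewrite sumR_flat_map. rewrite Rmult_comm, <- sumR_scal.
  apply sumR_le. intros [r Z] Hz. rewrite map_map. rewrite Rmult_comm, <- sumR_scal.
  apply sumR_le. intros [s Y] Hy. unfold nonnegl in *. rewrite Forall_forall in H1, H2.
  pose proof (H1 _ Hz). pose proof (H2 _ Hy). simpl in *. pose proof (Hd Z Y).
  assert (0 <= r * s) by (apply Rmult_le_pos; auto). nra.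
Qed.

Lemma nonneg_diag c l : 0 <= c -> nonnegl l -> Forall (fun '(r, _, _) => 0 <= r) (ldiag c l).
Proof.
  intros Hc H. unfold nonnegl, ldiag in *. rewrite Forall_forall in *. intros [[r M] N] Hin.
  apply in_map_iff in Hin. destruct Hin as [[r' X] [E Hin]]. inversion E; subst.
  pose proof (H _ Hin). simpl in *. apply Rmult_le_pos; auto.
Qed.

Lemma nonneg_prod l1 l2 : nonnegl l1 -> nonnegl l2 -> Forall (fun '(r, _, _) => 0 <= r) (lprod2 l1 l2).
Proof.
  intros H1 H2. unfold nonnegl, lprod2 in *. rewrite Forall_forall in *. intros [[r M] N] Hin.
  apply in_flat_map in Hin. destruct Hin as [[r1 X] [Hx Hin]]. apply in_map_iff in Hin.
  destruct Hin as [[r2 Y] [E Hy]]. inversion E; subst.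
  pose proof (H1 _ Hx). pose proof (H2 _ Hy). simpl in *. apply Rmult_le_pos; auto.
Qed.

Lemma good_nonneg D w : good D w -> exists l, (forall Y, D Y = ev l Y) /\ nonnegl l /\ wt l = w.
Proof.
  intros [l [e [f h]]]. exists l; repeat split; auto. unfold nonnegl. rewrite Forall_forall in *.
  intros [r Z] Hin. apply (f _ Hin).
Qed.

Lemma nonneg_scl c l : 0 <= c -> nonnegl l -> nonnegl (scl c l).
Proof.
  intros Hc H. unfold nonnegl, scl in *. rewrite Forall_forall in *. intros [r Z] Hin.
  apply in_map_iff in Hin. destruct Hin as [[r' X] [E Hin]]. inversion E; subst.
  pose proof (H _ Hin). simpl in *. apply Rmult_le_pos; auto.
Qed.

Lemma combine_good (s : list network) (c : network -> R) (F : network -> pdist) :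
  (forall Z, In Z s -> 0 <= c Z /\ good (F Z) 1) ->
  exists L, (forall Y, sumR (map (fun Z => c Z * F Z Y) s) = ev L Y) /\ nonnegl L /\
    wt L = sumR (map c s).
Proof.
  induction s as [|Z s IH]; intros H.
  - exists []; repeat split; simpl; auto. constructor.
  - destruct IH as [L [h1 [h2 h3]]]; [intros; apply H; simpl; auto|].
    destruct (H Z (or_introl eq_refl)) as [hc hg]. apply good_nonneg in hg.
    destruct hg as [lZ [e1 [n1 w1]]].
    exists (scl (c Z) lZ ++ L); repeat split.
    + intros Y. simpl. rewrite ev_app, ev_scl, <- e1, h1. auto.
    + unfold nonnegl. apply Forall_app. split; auto. apply nonneg_scl; auto.
    + rewrite wt_app, wt_scl, w1, h3. simpl. lra.
Qed.

Lemma kant_le_of (LM : LinMinProp) d D T w r : matching w D T -> mcost d w <= r -> kant_le d D T r.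
Proof.
  intros Hw Hc. destruct (kant_exists LM d D T w Hw) as [k Hk]. exists k; split; auto.
  destruct Hk as [_ Hk]. specialize (Hk w Hw). lra.
Qed.

Lemma diag_sim (LM : LinMinProp) d X a D : (forall Z, d Z Z = 0) -> ninv X -> is_action a -> step X a D ->
  exists T m, wstep a X T /\ has_mass T m /\
    kant_le d D (fun Y => T Y + (1 - m) * dirac NBot Y) 0.
Proof.
  intros Hd HX Ha Hs.
  pose proof (step_good _ _ _ Hs HX) as Hg. apply good_nonneg in Hg. destruct Hg as [l [e [n w]]].
  exists D, 1. split; [apply wstep_single; auto; apply step_hstep; auto|split].
  - rewrite <- w. apply (has_mass_ext (ev l)); [intros Y; rewrite e; auto|apply has_mass_ev].
  - apply (kant_le_of LM d D _ (ldiag 1 l)).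
    + split; [apply nonneg_diag; auto; lra|split].
      * intros Y. fold (mfst (ldiag 1 l) Y). rewrite mfst_diag, e. lra.
      * intros Y. fold (msnd (ldiag 1 l) Y). rewrite msnd_diag, e. lra.
    + rewrite mcost_diag; auto; lra.
Qed.


Definition mvb (a : label) (Z : network) : bool :=
  if excluded_middle_informative (exists T, hstep a Z T) then true else false.
Definition pick (a : label) (Z : network) : pdist :=
  match excluded_middle_informative (exists T, hstep a Z T) with
  | left H => proj1_sig (constructive_indefinite_description _ H)
  | right _ => fun _ => 0
  end.
Lemma mvb_true a Z : mvb a Z = true -> hstep a Z (pick a Z).
Proof.
  unfold mvb, pick. destruct excluded_middle_informative; [|discriminate].
  intros _. apply proj2_sig.
Qed.
Lemma mvb_false a Z : mvb a Z = false -> forall T, ~ hstep a Z T.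
Proof.
  unfold mvb. destruct excluded_middle_informative; [discriminate|]. intros _ T H; apply n; eauto.
Qed.

Lemma nonpos_zero x : 0 <= x -> ~ 0 < x -> x = 0.
Proof. intros H1 H2. apply Rnot_lt_le in H2. lra. Qed.

Section Main.
Variable LM : LinMinProp.
Variable d : network -> network -> R.
Hypothesis Hd : forall X Y, 0 <= d X Y <= 1.
Hypothesis Hdd : forall Z, d Z Z = 0.
Variables (M N : network) (q : R) (Delta : pdist).
Hypothesis HM : ninv M.
Hypothesis HN : ninv N.
Hypothesis Hq : 0 <= q < 1.
Hypothesis HDelta : is_dist Delta.
Hypothesis Hwt : wtau (dirac M) (fun X => (1 - q) * dirac N X + q * Delta X).

Let Gam := fun X => (1 - q) * dirac N X + q * Delta X.

Definition posb (Z : network) : bool :=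
  if excluded_middle_informative (0 < q * Delta Z) then true else false.

Lemma main_sim a Th : is_action a -> step N a Th ->
  exists T m, wstep a M T /\ has_mass T m /\
    kant_le d Th (fun Y => T Y + (1 - m) * dirac NBot Y) q.
Proof.
  intros Ha Hs.
  destruct HDelta as [Hnn [l [Hnd [Hsupp Hsum]]]].
  set (lpos := filter posb l).
  set (mov := filter (mvb a) lpos).
  set (nmov := filter (fun Z => negb (mvb a Z)) lpos).
  assert (Hlpos : forall Z, In Z lpos -> In Z l /\ 0 < q * Delta Z).
  { intros Z HZ. unfold lpos in HZ. apply filter_In in HZ. destruct HZ as [h1 h2].
    unfold posb in h2. destruct excluded_middle_informative; [auto|discriminate]. }
  assert (Hle1 : forall Z, In Z l -> Delta Z <= 1).
  { intros Z HZ. rewrite <- Hsum. apply (sumR_ge_elem Delta l Z); auto. }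
  assert (Hw1 : forall Z, In Z lpos -> 0 < q * Delta Z <= 1).
  { intros Z HZ. destruct (Hlpos Z HZ) as [h1 h2]. split; auto.
    pose proof (Hle1 Z h1). pose proof (Hnn Z). nra. }
  assert (HdecD : forall X, q * Delta X = sumR (map (fun Z => q * Delta Z * dirac Z X) lpos)).
  { intros X.
    assert (E : Delta X = sumR (map (fun Z => Delta Z * dirac Z X) l)).
    { destruct (classic (In X l)) as [Hin|Hnin].
      - rewrite sum_dirac_nodup; auto.
      - assert (Delta X = 0) by (destruct (classic (Delta X = 0)); auto; exfalso; auto).
        rewrite sum_dirac_notin; auto. intros y Hy E'; subst; contradiction. }
    rewrite E, <- sumR_scal.
    rewrite (sumR_filter posb). fold lpos.
    rewrite (sumR_zero _ (filter (fun x => negb (posb x)) l)).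
    - rewrite Rplus_0_r. apply sumR_ext. intros; lra.
    - intros Z HZ. apply filter_In in HZ. destruct HZ as [_ h]. unfold posb in h.
      destruct excluded_middle_informative as [|Hn]; [discriminate|].
      apply nonpos_zero in Hn; [|apply Rmult_le_pos; [lra|apply Hnn]].
      rewrite <- Rmult_assoc, Hn. ring. }
  assert (Hinvpos : forall Z, In Z lpos -> ninv Z).
  { intros Z HZ. apply (wtau_inv _ _ Hwt).
    - intros Z' H'. destruct (classic (Z' = M)) as [->|Hne]; auto. rewrite dirac_neq in H'; auto. lra.
    - destruct (Hlpos Z HZ) as [_ h]. pose proof (dirac_bounds N Z). nra. }
  assert (Hmov : forall Z, In Z mov -> In Z lpos /\ mvb a Z = true).
  { intros Z HZ. unfold mov in HZ. apply filter_In in HZ. auto. }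
  assert (Hnmov : forall Z, In Z nmov -> In Z lpos /\ mvb a Z = false).
  { intros Z HZ. unfold nmov in HZ. apply filter_In in HZ. destruct HZ as [h1 h2].
    split; auto. destruct (mvb a Z); auto. }
  set (lJ := (1 - q, N, Th) :: map (fun Z => (q * Delta Z, Z, pick a Z)) mov).
  set (lN := map (fun Z => (q * Delta Z, Z)) nmov).
  set (T' := fun Y => sumR (map (fun '(p, _, T) => p * T Y) lJ)).
  assert (Hlift : lift a Gam T').
  { exists lJ, lN. repeat split.
    - discriminate.
    - unfold lJ. constructor.
      + split; [lra|]. apply step_hstep; auto.
      + apply Forall_forall. intros [[p Z] T] Hin. apply in_map_iff in Hin.
        destruct Hin as [Z' [E Hin]]. inversion E; subst.
        destruct (Hmov _ Hin) as [h1 h2]. split; [apply Hw1; auto|apply mvb_true; auto].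
    - unfold lN. apply Forall_forall. intros [p Z] Hin. apply in_map_iff in Hin.
      destruct Hin as [Z' [E Hin]]. inversion E; subst.
      destruct (Hnmov _ Hin) as [h1 h2]. split; [apply Hw1; auto|apply mvb_false; auto].
    - intros X. unfold Gam, lJ, lN. simpl. rewrite !map_map.
      rewrite HdecD. rewrite (sumR_filter (mvb a) _ lpos). fold mov nmov. lra. }
  pose proof (step_good _ _ _ Hs HN) as Hg. apply good_nonneg in Hg.
  destruct Hg as [lt [et [nt wtt]]].
  destruct (combine_good mov (fun Z => q * Delta Z) (pick a)) as [L' [eL [nL wL]]].
  { intros Z HZ. destruct (Hmov _ HZ) as [h1 h2]. split; [pose proof (Hw1 _ h1); lra|].
    apply (hstep_good a Z); [apply mvb_true; auto|apply Hinvpos; auto]. }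
  assert (HT' : forall Y, T' Y = ev (scl (1 - q) lt ++ L') Y).
  { intros Y. unfold T', lJ. simpl. rewrite map_map, ev_app, ev_scl, <- et, <- eL. lra. }
  set (m := wt (scl (1 - q) lt ++ L')).
  assert (Hm : m = (1 - q) + wt L') by (unfold m; rewrite wt_app, wt_scl, wtt; lra).
  assert (HwL : wt L' <= q).
  { rewrite wL.
    assert (sumR (map (fun Z => q * Delta Z) mov) <= sumR (map (fun Z => q * Delta Z) lpos)).
    { rewrite (sumR_filter (mvb a) _ lpos). fold mov nmov.
      assert (0 <= sumR (map (fun Z => q * Delta Z) nmov)).
      { apply sumR_nonneg. intros Z HZ. destruct (Hnmov _ HZ) as [h _]. pose proof (Hw1 _ h); lra. }
      lra. }
    assert (sumR (map (fun Z => q * Delta Z) lpos) = q).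
    { transitivity (q * sumR (map Delta l)); [|rewrite Hsum; ring]. rewrite <- sumR_scal.
      rewrite (sumR_filter posb _ l). fold lpos.
      rewrite (sumR_zero _ (filter (fun x => negb (posb x)) l)); [lra|].
      intros Z HZ. apply filter_In in HZ. destruct HZ as [_ h]. unfold posb in h.
      destruct excluded_middle_informative as [|Hn]; [discriminate|].
      apply nonpos_zero in Hn; [|apply Rmult_le_pos; [lra|apply Hnn]]. exact Hn. }
    lra. }
  set (Lb := L' ++ [(1 - m, NBot)]).
  assert (HwLb : wt Lb = q) by (unfold Lb; rewrite wt_app, Hm; unfold wt at 2; simpl; lra).
  assert (HnLb : nonnegl Lb).
  { unfold Lb, nonnegl. apply Forall_app. split; auto. constructor; [lra|constructor]. }
  exists T', m. split; [|split].
  - destruct a; simpl in Ha |- *; try contradiction;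
      try (exists Gam, T'; split; [exact Hwt|split; [exact Hlift|constructor]]).
    eapply wtau_snoc; [exact Hwt|exact Hlift].
  - apply (has_mass_ext (ev (scl (1 - q) lt ++ L'))); [intros; rewrite HT'; auto|apply has_mass_ev].
  - apply (kant_le_of LM d Th _ (ldiag (1 - q) lt ++ lprod2 lt Lb)).
    + split; [|split].
      * apply Forall_app. split; [apply nonneg_diag; auto; lra|apply nonneg_prod; auto].
      * intros X. fold (mfst (ldiag (1 - q) lt ++ lprod2 lt Lb) X).
        rewrite mfst_app, mfst_diag, mfst_prod, HwLb, <- et. lra.
      * intros Y. fold (msnd (ldiag (1 - q) lt ++ lprod2 lt Lb) Y).
        rewrite msnd_app, msnd_diag, msnd_prod, wtt, <- et, HT'.
        unfold Lb. rewrite !ev_app, ev_scl, <- et. unfold ev at 3. simpl. lra.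
    + rewrite mcost_app, mcost_diag; auto.
      pose proof (mcost_prod d lt Lb Hd nt HnLb). rewrite wtt, HwLb in H. lra.
Qed.
End Main.


Definition dq (N M : network) (q : R) (X Y : network) : R :=
  if excluded_middle_informative (X = Y) then 0
  else if excluded_middle_informative (X = N /\ Y = M) then q else 1.

Lemma dq_diag N M q X : dq N M q X X = 0.
Proof. unfold dq. destruct excluded_middle_informative; congruence. Qed.

Lemma dq_bounds N M q X Y : 0 <= q <= 1 -> 0 <= dq N M q X Y <= 1.
Proof. intros Hq. unfold dq. repeat destruct excluded_middle_informative; lra. Qed.

Lemma dq_ge N M q X Y : 0 <= q <= 1 -> X <> Y -> q <= dq N M q X Y.
Proof. intros Hq H. unfold dq. repeat destruct excluded_middle_informative; try lra; congruence. Qed.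

Lemma dq_tri N M q X Y Z : 0 <= q <= 1 -> dq N M q X Z <= dq N M q X Y + dq N M q Y Z.
Proof.
  intros Hq.
  destruct (classic (X = Z)) as [->|hXZ]; [rewrite dq_diag; pose proof (dq_bounds N M q Z Y Hq); pose proof (dq_bounds N M q Y Z Hq); lra|].
  destruct (classic (Y = X)) as [->|hYX]; [rewrite dq_diag; lra|].
  destruct (classic (Y = Z)) as [->|hYZ]; [rewrite dq_diag; lra|].
  pose proof (dq_ge N M q X Y Hq (fun e => hYX (eq_sym e))).
  pose proof (dq_ge N M q Y Z Hq hYZ).
  unfold dq at 1. destruct excluded_middle_informative; [congruence|].
  destruct excluded_middle_informative as [[e1 e2]|hn]; [lra|].
  unfold dq at 1 2. repeat destruct excluded_middle_informative; try congruence; try lra.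
  destruct a as [e1 e2], a0 as [e3 e4]. subst. congruence.
Qed.

Lemma dq_lt1 N M q X Y : dq N M q X Y < 1 -> X = Y \/ (X <> Y /\ X = N /\ Y = M /\ q < 1).
Proof.
  unfold dq. repeat destruct excluded_middle_informative; intros H; try lra; auto.
  right. destruct a; auto.
Qed.

Theorem main_LM (LM : LinMinProp) :
  forall (mm : network -> network -> R), least_wsqm mm ->
  forall (M N : network) (q : R) (Delta : pdist),
    net_ok M -> net_ok N -> 0 <= q <= 1 -> is_dist Delta ->
    wtau (dirac M) (fun X => (1 - q) * dirac N X + q * Delta X) ->
    qsim mm q N M.
Proof.
  intros mm [_ Hleast] M N q Delta HM HN Hq HD Hwt. unfold qsim.
  apply Rle_trans with (dq N M q N M).
  - apply Hleast; auto. split.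
    + split; [|split].
      * intros; apply dq_bounds; auto.
      * intros; apply dq_diag.
      * intros; apply dq_tri; auto.
    + intros X Y HX HY Hlt a D Ha Hs.
      destruct (dq_lt1 _ _ _ _ _ Hlt) as [<-|[hne [-> [-> hq]]]].
      * rewrite dq_diag. apply (diag_sim LM); auto. apply dq_diag. apply netok_ninv; auto.
      * destruct (main_sim LM (dq N M q) (fun X Y => dq_bounds N M q X Y Hq) (dq_diag N M q)
                   M N q Delta (netok_ninv _ HM) (netok_ninv _ HN) (conj (proj1 Hq) hq) HD Hwt a D Ha Hs)
          as [T [m [h1 [h2 h3]]]].
        exists T, m. split; auto. split; auto.
        replace (dq N M q N M) with q; auto.
        unfold dq. repeat destruct excluded_middle_informative; try congruence; tauto.
  - unfold dq. repeat destruct excluded_middle_informative; try lra. exfalso; tauto.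
Qed.

Module LinMinMod.
From mathcomp Require Import all_boot all_order all_algebra.
From mathcomp Require Import all_classical all_reals all_analysis.
From mathcomp Require Import Rstruct Rstruct_topology.
Import Order.TTheory GRing.Theory Num.Theory.
Import numFieldTopology.Exports.

Section LinMin.
Local Open Scope classical_set_scope.
Local Open Scope ring_scope.

Lemma lin_ext K c v v' : (forall k, lt k K -> v k = v' k) -> lin K c v = lin K c v'.
Proof.
move=> H; rewrite /lin; congr sumR; apply: map_ext_in => k /in_seq [_ kK].
by rewrite H.
Qed.

Lemma feasible_ext K ub I g e v v' : (forall k, lt k K -> v k = v' k) ->
  feasible K ub I g e v -> feasible K ub I g e v'.
Proof.
move=> H [H1 H2]; split.
  by move=> k kK; rewrite -H //; apply: H1.
move=> i; rewrite -(H2 i); congr sumR; apply: map_ext_in => k /in_seq [_ kK].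
by rewrite H.
Qed.

Definition tr K (rv : 'rV[R]_K) : nat -> R :=
  fun k => oapp (fun i : 'I_K => rv ord0 i) 0 (insub k).

Arguments tr {K} rv k.
Lemma tr_cont K k : continuous (fun rv : 'rV[R]_K => tr rv k).
Proof.
rewrite /tr; case: (insub k) => [i|] /=.
  exact: coord_continuous.
exact: cst_continuous.
Qed.

Lemma sum_cont K (h : nat -> R) (s : seq nat) :
  continuous (fun rv : 'rV[R]_K => sumR (List.map (fun k => Rmult (tr rv k) (h k)) s)).
Proof.
elim: s => [|k s IH] /=.
  exact: cst_continuous.
move=> x.
have A : {for x, continuous (fun rv : 'rV[R]_K => tr rv k * h k)}.
  have := @continuousM _ _ (fun rv : 'rV[R]_K => tr rv k) (fun=> h k) x (tr_cont K k x) (@cst_continuous _ _ (h k) x).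
  exact.
have := @continuousD R R^o _ (fun rv : 'rV[R]_K => tr rv k * h k) (fun rv => sumR (List.map (fun k => Rmult (tr rv k) (h k)) s)) x A (IH x).
exact.
Qed.

Lemma tr_row K (v : nat -> R) k : lt k K -> tr (\row_(i < K) v i) k = v k.
Proof. by move=> /ssrnat.ltP kK; rewrite /tr insubT /= mxE. Qed.

Lemma lin_min (K : nat) (ub : nat -> R) (I : Type) (g : I -> nat -> R) (e : I -> R) (c : nat -> R) :
  (exists v, feasible K ub I g e v) ->
  exists v, feasible K ub I g e v /\
    forall v', feasible K ub I g e v' -> Rle (lin K c v) (lin K c v').
Proof.
move=> [v0 Hv0].
pose F := [set rv : 'rV[R]_K | feasible K ub I g e (tr rv)].
pose fc := fun rv : 'rV[R]_K => lin K c (tr rv).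
have F0 : F !=set0.
  exists (\row_(i < K) v0 i); rewrite /F /=.
  by apply: (feasible_ext _ _ _ _ _ v0) => // k kK; rewrite tr_row.
have Fcl : closed F.
  have -> : F = (\bigcap_(k in [set k | lt k K]) [set rv | 0 <= tr rv k]) `&`
              (\bigcap_(k in [set k | lt k K]) [set rv | tr rv k <= ub k]) `&`
              (\bigcap_(i in [set: I]) [set rv | lin K (g i) (tr rv) = e i]).
    apply/seteqP; split => rv /=.
      move=> [H1 H2]; split; [split|].
      - by move=> k /= kK; apply/RleP; case: (H1 k kK).
      - by move=> k /= kK; apply/RleP; case: (H1 k kK).
      - by move=> i _; rewrite /lin; apply: H2.
    move=> [[H1 H2] H3]; split.
      by move=> k kK; split; apply/RleP; [apply: H1|apply: H2].
    by move=> i; apply: H3.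
  apply: closedI; first apply: closedI.
  - apply: closed_bigI => k _.
    exact: (proj1 (continuous_closedP _) (tr_cont K k) _ (@closed_ge _ 0)).
  - apply: closed_bigI => k _.
    exact: (proj1 (continuous_closedP _) (tr_cont K k) _ (@closed_le _ (ub k))).
  - apply: closed_bigI => i _.
    exact: (proj1 (continuous_closedP _) (sum_cont K (g i) (List.seq 0 K)) _ (@closed_eq _ (e i))).
have Fco : compact F.
  apply: (subclosed_compact Fcl (@rV_compact _ K (fun i => `[0, ub i]%classic) (fun i => @segment_compact _ _ _))).
  move=> rv [H1 _] i /=.
  have := H1 i (ssrnat.ltP (ltn_ord i)); rewrite /tr valK /= => -[a b].
  by rewrite in_itv /=; apply/andP; split; apply/RleP.
have fcc : {within F, continuous fc}.
  apply: continuous_subspaceT => x; exact: sum_cont.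
have [cm cmF cmin] := EVT_min_rV F0 Fco fcc.
exists (tr cm); split.
  by rewrite inE in cmF.
move=> v' Hv'.
have -> : lin K c v' = fc (\row_(i < K) v' i).
  by rewrite /fc; apply: lin_ext => k kK; rewrite tr_row.
apply/RleP; apply: cmin; rewrite inE /F /=.
by apply: (feasible_ext _ _ _ _ _ v') => // k kK; rewrite tr_row.
Qed.
End LinMin.

Lemma lin_min_prop : LinMinProp.
Proof. intros K ub I g e c H. exact (lin_min K ub I g e c H). Qed.
End LinMinMod.

Open Scope R_scope.

Theorem proposition2p11 :
  forall (mm : network -> network -> R), least_wsqm mm ->
  forall (M N : network) (q : R) (Delta : pdist),
    net_ok M -> net_ok N -> 0 <= q <= 1 -> is_dist Delta ->
    wtau (dirac M) (fun X => (1 - q) * dirac N X + q * Delta X) ->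
    qsim mm q N M.
Proof.
  exact (main_LM LinMinMod.lin_min_prop).
Qed.
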